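(* Let $K$ be a field of characteristic zero, and let $N_K$ be the number of roots of unity in $K$. Let $F,G\in K[X]$ satisfy $\deg(F)=d>1$ and $F^k=G^k$ for some $k\in\mathbb{N}$. Then $F^n=G^n$ for some $n$ with $1\le n\le N_K$.
   Context: $F^n$ denotes the $n$-th iterate of $F$ under composition; $\mathbb{N}$ is the set of positive integers. *)

(* Defs.v *)
From HB Require Import structures.
From mathcomp Require Import all_boot all_order all_algebra.
Set Implicit Arguments. Unset Strict Implicit. Unset Printing Implicit Defensive.
Import GRing.Theory.
Local Open Scope ring_scope.

Definition poly_iter (K : fieldType) (F : {poly K}) (n : nat) : {poly K} :=
  iter n (fun p => F \Po p) 'X.

Definition root_of_unity (K : fieldType) (x : K) : Prop :=
  exists m : nat, (0 < m)%N /\ x ^+ m = 1.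

Definition num_roots_of_unity (K : fieldType) (N : nat) : Prop :=
  exists s : seq K, [/\ uniq s, size s = N &
                        forall x : K, x \in s <-> root_of_unity x].

(* Main.v *)
Require Import Defs.
From HB Require Import structures.
From mathcomp Require Import all_boot all_order all_algebra.
Import GRing.Theory.
Local Open Scope ring_scope.

From mathcomp Require Import zify ring.
Set Implicit Arguments. Unset Strict Implicit.
Section SB.
Variable K : fieldType.
Implicit Types p q : {poly K}.

Definition sb p (N : nat) (v : K) := (size p <= N.+1)%N /\ p`_N = v.

Lemma sb0 p N : (size p <= N)%N -> sb p N 0.
Proof. by move=> h; split; [exact: leqW | exact: nth_default]. Qed.

Lemma sbD p q N u v : sb p N u -> sb q N v -> sb (p + q) N (u + v).
Proof.
move=> [h1 h2] [h3 h4]; split; last by rewrite coefD h2 h4.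
by apply: leq_trans (size_polyD _ _) _; rewrite geq_max h1 h3.
Qed.

Lemma sbZ p N u c : sb p N u -> sb (c *: p) N (c * u).
Proof.
move=> [h1 h2]; split; last by rewrite coefZ h2.
exact: leq_trans (size_scale_leq _ _) h1.
Qed.

Lemma sbM p q a b u v : sb p a u -> sb q b v -> sb (p * q) (a + b) (u * v).
Proof.
move=> [h1 h2] [h3 h4]; split.
  apply: leq_trans (size_polyMleq _ _) _; lia.
rewrite coefM (bigD1 (Ordinal (leq_addr b a : (a < (a+b).+1)%N))) //=.
rewrite big1 ?addr0; first by rewrite addKn h2 h4.
move=> [j hj] /= hne.
have hne' : j != a by apply: contra hne => /eqP e; apply/eqP/val_inj.
case: (ltngtP j a) hne' => // hja _.
  rewrite [q`__]nth_default ?mulr0 //; apply: leq_trans h3 _; lia.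
by rewrite [p`__]nth_default ?mul0r //; exact: leq_trans h1 hja.
Qed.

Lemma sb_sum (I : finType) (P : pred I) (F : I -> {poly K}) N (v : I -> K) :
  (forall i, P i -> sb (F i) N (v i)) ->
  sb (\sum_(i | P i) F i) N (\sum_(i | P i) v i).
Proof.
move=> h; elim/big_rec2: _ => [|i y1 y2 Pi IH]; first by apply: sb0; rewrite size_poly0.
exact: sbD (h i Pi) IH.
Qed.

End SB.
Lemma sbB (K : fieldType) (p q : {poly K}) N u v : sb p N u -> sb q N v -> sb (p - q) N (u - v).
Proof.
move=> h1 [h3 h4]; apply: sbD h1 _; split; by rewrite ?size_polyN ?coefN ?h4.
Qed.
Section U.
Variable K : fieldType.
Implicit Types p q : {poly K}.

Lemma sb_idx p N N' v : N = N' -> sb p N v -> sb p N' v.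
Proof. by move=> ->. Qed.
Lemma sb_val p N v v' : v = v' -> sb p N v -> sb p N v'.
Proof. by move=> ->. Qed.

Lemma sb_lead p N : size p = N.+1 -> sb p N (lead_coef p).
Proof. by move=> h; split; rewrite ?h // /lead_coef h. Qed.

Lemma sb_size0 p N : sb p N 0 -> (size p <= N)%N.
Proof.
move=> [h1 h2]; rewrite leq_eqVlt in h1; case/orP: h1 => [/eqP e|] //.
have: lead_coef p = 0 by rewrite /lead_coef e.
by move/eqP; rewrite lead_coef_eq0 => /eqP p0; rewrite p0 size_poly0 in e.
Qed.

Lemma sbX p a u i : sb p a u -> sb (p ^+ i) (a * i) (u ^+ i).
Proof.
move=> h; elim: i => [|i IH].
  by rewrite !expr0 muln0; split; rewrite ?size_poly1 // coef1.
rewrite !exprS; apply: sb_idx (sbM h IH); by rewrite mulnS.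
Qed.

Lemma commute_uniq (H P Q : {poly K}) m D :
  [pchar K] =i pred0 -> size H = D.+1 -> (1 < D)%N ->
  size P = m.+1 -> size Q = m.+1 -> lead_coef P = lead_coef Q ->
  P \Po H = H \Po P -> Q \Po H = H \Po Q -> P = Q.
Proof.
move=> ch0 sH D1 sP sQ lPQ cP cQ.
apply/eqP; rewrite -subr_eq0; apply/negP => /negP R0.
set R := P - Q in R0.
set c := lead_coef P.
have c0 : c != 0 by rewrite lead_coef_eq0 -size_poly_eq0 sP.
have hP := sb_lead sP; rewrite -/c in hP; have hQ := sb_lead sQ; rewrite -lPQ -/c in hQ.
have sR : (size R <= m)%N.
  by apply: sb_size0; apply: sb_val (sbB hP hQ); rewrite subrr.
set e := (size R).-1.
have sRe : size R = e.+1 by rewrite /e prednK // lt0n size_poly_eq0.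
have em : (e < m)%N by rewrite -ltnS -sRe; apply: leq_trans sR _.
set r := lead_coef R.
have r0 : r != 0 by rewrite lead_coef_eq0.
have hR := sb_lead sRe; rewrite -/r in hR.
have claim : forall i, sb (P ^+ i.+1 - Q ^+ i.+1) (e + m * i) (i.+1%:R * c ^+ i * r).
  elim=> [|i IH].
    by rewrite !expr1 muln0 addn0 expr0 mul1r; apply: sb_val hR; ring.
  have -> : P ^+ i.+2 - Q ^+ i.+2 = P * (P ^+ i.+1 - Q ^+ i.+1) + R * Q ^+ i.+1.
    by rewrite /R !exprS; ring.
  have h1 : sb (P * (P ^+ i.+1 - Q ^+ i.+1)) (e + m * i.+1) (c * (i.+1%:R * c ^+ i * r)).
    by apply: sb_idx (sbM hP IH); lia.
  have := sbD h1 (sbM hR (sbX i.+1 hQ)).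
  by move=> h; apply: sb_val h; rewrite !exprS -!natr1; ring.
case: D sH D1 => [//|D'] sH D1.
have eq1 : R \Po H = \sum_(i < D'.+1) H`_i *: (P ^+ i - Q ^+ i) + H`_D'.+1 *: (P ^+ D'.+1 - Q ^+ D'.+1).
  rewrite /R comp_polyB cP cQ !comp_polyE sH -sumrB big_ord_recr /=.
  by rewrite scalerBr; congr (_ + _); apply: eq_bigr => i _; rewrite scalerBr.
have hs : sb (\sum_(i < D'.+1) H`_i *: (P ^+ i - Q ^+ i)) (e + m * D') (\sum_(i < D'.+1) (0:K)).
  apply: sb_sum => [[[|j] hj]] _ /=.
    by rewrite !expr0 subrr scaler0; apply: sb0; rewrite size_poly0.
  apply: sb0; apply: leq_trans (size_scale_leq _ _) _.
  have [hh _] := claim j; apply: leq_trans hh _; nia.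
rewrite big1_eq in hs.
have hl := sbZ H`_D'.+1 (claim D').
have := sbD hs hl; rewrite -eq1 add0r => -[_].
rewrite nth_default; last first.
  apply: leq_trans (size_comp_poly_leq _ _) _; rewrite sH sRe /=; nia.
move/eqP; apply/negP; rewrite eq_sym !mulf_neq0 ?expf_neq0 //.
  by have := lead_coef_eq0 H; rewrite /lead_coef sH /= => ->; rewrite -size_poly_eq0 sH.
by have /pcharf0P -> := ch0.
Qed.
End U.
Fixpoint ssum (d n : nat) : nat := if n is n'.+1 then (ssum d n' * d).+1 else 0%N.

Section I.
Variable K : fieldType.
Implicit Types F : {poly K}.

Lemma iterS F n : poly_iter F n.+1 = F \Po poly_iter F n.
Proof. by []. Qed.

Lemma iter_add F a b : poly_iter F a \Po poly_iter F b = poly_iter F (a + b).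
Proof.
elim: a => [|a IH]; first by rewrite add0n /poly_iter /= comp_polyX.
by rewrite addSn !iterS -comp_polyA IH.
Qed.

Lemma iter_comm F a b : poly_iter F a \Po poly_iter F b = poly_iter F b \Po poly_iter F a.
Proof. by rewrite !iter_add addnC. Qed.

Lemma size_iter F n : (1 < size F)%N -> size (poly_iter F n) = ((size F).-1 ^ n).+1.
Proof.
move=> hF; elim: n => [|n IH]; first by rewrite /poly_iter /= size_polyX.
have h := size_comp_poly F (poly_iter F n).
rewrite IH /= in h; rewrite iterS expnS.
have : (0 < (size F).-1 * (size F).-1 ^ n)%N.
  by rewrite muln_gt0 expn_gt0; apply/andP; split; rewrite ?lt0n //; lia.
by rewrite -h; case: (size _).
Qed.

Lemma lead_iter F n : (1 < size F)%N ->
  lead_coef (poly_iter F n) = lead_coef F ^+ ssum (size F).-1 n.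
Proof.
move=> hF; elim: n => [|n IH]; first by rewrite /poly_iter /= lead_coefX expr0.
rewrite iterS lead_coef_comp; last by rewrite size_iter //; rewrite ltnS expn_gt0; lia.
by rewrite IH /= -exprM exprS mulnC.
Qed.

Lemma size_iter_const F n : (size F <= 1)%N -> (0 < n)%N -> (size (poly_iter F n) <= 1)%N.
Proof.
move=> h; case: n => // n _; rewrite iterS.
apply: leq_trans (size_comp_poly_leq _ _) _.
by have -> : (size F).-1 = 0%N by lia.
Qed.
End I.

Unset Implicit Arguments.

Theorem corollary6p4 (K : fieldType) (F G : {poly K}) (k : nat) :
  [pchar K] =i pred0 ->
  (2 < size F)%N ->
  (0 < k)%N ->
  poly_iter F k = poly_iter G k ->
  exists n : nat,
    [/\ (1 <= n)%N,
        (forall N : nat, num_roots_of_unity K N -> (n <= N)%N) &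
        poly_iter F n = poly_iter G n].
Proof.
move=> ch0 sF k0 hk.
set d := (size F).-1.
have hF1 : (1 < size F)%N by lia.
have d2 : (1 < d)%N by rewrite /d; lia.
have hG1 : (1 < size G)%N.
  rewrite ltnNge; apply/negP => hG.
  have := size_iter_const hG k0; rewrite -hk size_iter //; lia.
have sG : (size G).-1 = d.
  have := size_iter k hF1; rewrite hk size_iter // => -[] /eqP.
  by rewrite eqn_exp2r // => /eqP.
set a := lead_coef F; set b := lead_coef G.
have a0 : a != 0 by rewrite lead_coef_eq0 -size_poly_eq0; lia.
have b0 : b != 0 by rewrite lead_coef_eq0 -size_poly_eq0; lia.
set z := b / a.
have z0 : z != 0 by rewrite mulf_neq0 ?invr_eq0.
have bz : b = z * a by rewrite /z divfK.
have zk : z ^+ ssum d k = 1.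
  have := lead_iter k hF1; rewrite hk lead_iter // sG -/a -/b bz exprMn.
  by move/eqP; rewrite -subr_eq0 -{2}(mul1r (a ^+ _)) -mulrBl mulf_eq0 expf_eq0 (negbTE a0) andbF orbF subr_eq0 => /eqP.
have sk0 : (0 < ssum d k)%N by case: (k) k0.
have exr : exists n, (0 < n)%N && (z ^+ n == 1) by exists (ssum d k); rewrite sk0 zk eqxx.
case: (ex_minnP exr) => r /andP[r0 /eqP zr] rmin.
have zdvd : forall j, z ^+ j = 1 -> (r %| j)%N.
  move=> j zj; rewrite /dvdn; case: (posnP (j %% r)) => [//|hne].
  have: (r <= j %% r)%N.
    apply: rmin; rewrite hne /=.
    move: zj; rewrite {1}(divn_eq j r) exprD exprM exprAC zr expr1n mul1r => ->.
    by [].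
  by rewrite leqNgt ltn_pmod.
have cop : coprime r d.
  apply: coprime_dvdl (zdvd _ zk) _.
  case: (k) k0 => // k' _ /=.
  rewrite -coprime_modl -addn1 modnMDl modn_small //; exact: coprime1n.
pose g (x : 'I_r) : 'I_r := Ordinal (ltn_pmod (x * d).+1 r0).
have ginj : injective g.
  have key : forall x y : nat, (x <= y)%N -> (y < r)%N ->
      ((x * d).+1 %% r = (y * d).+1 %% r)%N -> x = y.
    move=> x y xy yr /eqP; rewrite eq_sym eqn_mod_dvd; last by rewrite ltnS leq_mul2r xy orbT.
    rewrite subSS -mulnBl Gauss_dvdl // => hd.
    have : (y - x == 0)%N.
      rewrite -leqn0 leqNgt; apply/negP => hp.
      have := dvdn_leq hp hd; lia.
    lia.
  move=> x y /(congr1 val) /= e; apply: val_inj => /=.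
  case: (leqP x y) => hxy.
    exact: key hxy (ltn_ord y) e.
  by apply/esym/(key _ _ (ltnW hxy) (ltn_ord x)).
have giter : forall n, val (iter n g (Ordinal r0)) = (ssum d n %% r)%N.
  elim=> [|n IH]; first exact: (esym (mod0n r)).
  have gv : forall x, val (g x) = ((x * d).+1 %% r)%N by [].
  have sS : ssum d n.+1 = (ssum d n * d).+1 by [].
  have ei : iter n.+1 g (Ordinal r0) = g (iter n g (Ordinal r0)) by [].
  rewrite sS ei gv.
  rewrite IH -[(_ * d).+1]addn1 -[(ssum d n * d).+1]addn1.
  by rewrite -modnDml modnMml modnDml.
set n := order g (Ordinal r0).
have n1 : (1 <= n)%N by apply: order_gt0.
have nr : (n <= r)%N by rewrite /n /order; apply: leq_trans (max_card _) _; rewrite card_ord.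
have rn : (r %| ssum d n)%N.
  have := giter n; rewrite iter_order //= => e.
  by rewrite /dvdn -e.
exists n; split => //.
  move=> N [s [us ss hs]]; apply: leq_trans nr _; rewrite -ss.
  have <- : size [seq z ^+ i | i <- iota 0 r] = r by rewrite size_map size_iota.
  apply: uniq_leq_size.
    rewrite map_inj_in_uniq ?iota_uniq // => i j; rewrite !mem_iota !add0n => /andP[_ ir] /andP[_ jr] e.
    have key : forall i j, (i <= j)%N -> (j < r)%N -> z ^+ i = z ^+ j -> i = j.
      move=> i' j' ij jr' e'.
      have : z ^+ (j' - i') = 1.
        apply: (mulfI (expf_neq0 i' z0)); rewrite -exprD subnKC // mulr1 e' //.
      move/zdvd => hd.
      have : (j' - i' == 0)%N.
        rewrite -leqn0 leqNgt; apply/negP => hp.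
        have := dvdn_leq hp hd; lia.
      lia.
    case: (leqP i j) => hij; first exact: key.
    by apply/esym/key => //; apply: ltnW.
  move=> x /mapP[i _ ->]; apply/hs; exists r; split => //.
  by rewrite -exprM mulnC exprM zr expr1n.
apply: (@commute_uniq K (poly_iter F k) _ _ (d ^ n) (d ^ k)) => //.
- by rewrite size_iter.
- by have := ltn_expl k d2; lia.
- by rewrite size_iter.
- by rewrite size_iter // sG.
- rewrite !lead_iter // sG -/a -/b bz exprMn.
  case/dvdnP: rn => q ->.
  have zq : z ^+ (q * r) = 1 by rewrite exprM exprAC zr expr1n.
  by rewrite zq mul1r.
- by rewrite iter_comm.
- by rewrite hk iter_comm.
Qed.
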